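(* For every integer $g\ge1$, the number of reflective numerical semigroups of genus $g$ equals $g+1-\tau(g)$, where $\tau(g)$ is the number of positive divisors of $g$.
   Context: A numerical semigroup is a submonoid $S$ of $(\mathbb{N}_0,+)$ with finite complement; its genus is the number of elements of $\mathbb{N}_0\setminus S$. A numerical semigroup $S$ of genus $g\ge1$ is called reflective if for every $z\in\{0,1,\dots,g-1\}$ exactly one of $z$ and $z+g$ belongs to $S$. *)

(* Defs.v *)
From mathcomp Require Import all_boot.
Set Implicit Arguments. Unset Strict Implicit. Unset Printing Implicit Defensive.

Definition has_genus (S : nat -> bool) (g : nat) : Prop :=
  exists2 s : seq nat, uniq s & (forall x, (x \in s) = ~~ S x) /\ size s = g.

Definition numerical_semigroup (S : nat -> bool) : Prop :=
  [/\ S 0,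
      (forall x y, S x -> S y -> S (x + y)) &
      exists g, has_genus S g].

Definition reflective_of_genus (S : nat -> bool) (g : nat) : Prop :=
  [/\ numerical_semigroup S, has_genus S g, 0 < g &
      forall z, z < g -> S z != S (z + g)].

Definition tau (g : nat) : nat := size (divisors g).

(* Main.v *)
Require Import Defs.
From mathcomp Require Import all_boot zify.

Definition Sm (g m : nat) : nat -> bool := fun x =>
  if x < g then m %| x else if x < g + g then ~~ (m %| (x - g)) else true.

Lemma Sm_add g m : 0 < m <= g -> (m %| g -> m = g) ->
  forall x y, Sm g m x -> Sm g m y -> Sm g m (x + y).
Proof.
move=> /andP[m0 mg] hg x y; rewrite /Sm.
have gen : forall a b, a < g -> g <= b -> m %| a -> (if b < g + g then ~~ (m %| b - g) else true) ->
    (if a + b < g then m %| a + b else if a + b < g + g then ~~ (m %| a + b - g) else true).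
  move=> a b ha hb da hbb.
  rewrite ifF; last by lia.
  move: hbb; case: ifP => hb2; last by rewrite ifF //; lia.
  case: ifP => // _.
  by rewrite (_ : a + b - g = a + (b - g)) ?dvdn_addr //; lia.
case: (ltnP x g) => hx; case: (ltnP y g) => hy.
- move=> dx dy; case: ifP => hxy; first by rewrite dvdn_add.
  case: ifPn => hxy2 //; apply/negP => d.
  have dg : m %| g.
    have -> : g = (x + y) - (x + y - g) by lia.
    by rewrite dvdn_sub ?dvdn_add.
  have emg := hg dg; subst m.
  have x0 : x = 0 by case: x hx dx {hxy hxy2 d} => // x' hx /dvdn_leq; lia.
  have y0 : y = 0 by case: y hy dy {hxy hxy2 d} => // y' hy /dvdn_leq; lia.
  by move: hxy; rewrite x0 y0; lia.
- by move=> dx dy; apply: gen.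
- by move=> dx dy; rewrite addnC; apply: gen.
- move=> _ _; rewrite ifF; last by lia.
  by rewrite ifF //; lia.
Qed.

Lemma Sm_genus g m : has_genus (Sm g m) g.
Proof.
exists [seq x <- iota 0 (g + g) | ~~ Sm g m x]; first by rewrite filter_uniq ?iota_uniq.
split.
  move=> x; rewrite mem_filter mem_iota add0n.
  rewrite leq0n /=; case: (ltnP x (g + g)) => hx; rewrite ?andbT ?andbF; first by [].
  have h1 : (x < g) = false by lia.
  have h2 : (x < g + g) = false by lia.
  by rewrite /Sm h1 h2.
rewrite size_filter iotaD count_cat.
have -> : iota (0 + g) g = map (addn g) (iota 0 g) by rewrite -iotaDl addn0.
rewrite count_map.
have -> : count (fun x => ~~ Sm g m x) (iota 0 g) = count (predC (dvdn m)) (iota 0 g).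
  by apply: eq_in_count => x; rewrite mem_iota add0n => /andP[_ hx]; rewrite /= /Sm hx.
have -> : count (preim (addn g) (fun x => ~~ Sm g m x)) (iota 0 g) = count (dvdn m) (iota 0 g).
  apply: eq_in_count => x; rewrite mem_iota add0n => /andP[_ hx]; rewrite /= /Sm.
  have h1 : (g + x < g) = false by lia.
  have h2 : (g + x < g + g) by lia.
  by rewrite h1 h2 negbK addKn.
by rewrite addnC count_predC size_iota.
Qed.

Lemma Sm_refl g m : 0 < m <= g -> (m %| g -> m = g) -> 0 < g -> reflective_of_genus (Sm g m) g.
Proof.
move=> hm hg g0; split => //; last 2 first.
- exact: Sm_genus.
- move=> z hz; rewrite /Sm hz ifF; last by lia.
  by rewrite ifT ?addnK; [case: (m %| z) | lia].
split; first by rewrite /Sm g0 dvdn0.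
  exact: Sm_add.
by exists g; apply: Sm_genus.
Qed.


Lemma complete g S : reflective_of_genus S g ->
  exists2 m, (0 < m <= g) /\ (m %| g -> m = g) & S =1 Sm g m.
Proof.
case=> [[S0 Sadd _] [s us [ms ss]] g0 refl].
have big : forall x, g + g <= x -> S x.
  pose t := [seq (if S z then z + g else z) | z <- iota 0 g].
  have ut : uniq t.
    rewrite map_inj_in_uniq ?iota_uniq // => a b.
    rewrite !mem_iota !add0n => /andP[_ ha] /andP[_ hb].
    by case: (S a); case: (S b) => /=; lia.
  have sub : {subset t <= s}.
    move=> x /mapP[z]; rewrite mem_iota add0n => /andP[_ hz] ->.
    have hr := refl z hz; rewrite ms.
    by case E: (S z) hr => /=; [case: (S (z + g)) | rewrite E].
  have hsz : size s <= size t by rewrite ss size_map size_iota.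
  have [_ eq] := uniq_min_size ut sub hsz.
  move=> x hx; apply/negPn/negP => nx.
  have : x \in t by rewrite eq ms.
  case/mapP=> z; rewrite mem_iota add0n => /andP[_ hz] ex.
  by move: ex; case: (S z) => /=; lia.
pose P := fun n => (0 < n <= g) && ((n == g) || S n).
have exP : exists n, P n by exists g; rewrite /P g0 leqnn eqxx.
case: (ex_minnP exP) => m Pm minm.
move: Pm; rewrite /P => /andP[/andP[m0 mg] Pm2].
have Sg : ~~ S g by move: (refl 0 g0); rewrite S0 add0n; case: (S g).
have mS : m < g -> S m.
  by move=> lt; move: Pm2; rewrite (ltn_eqF lt).
have low : forall y, y < g -> S y = (m %| y).
  elim/ltn_ind => y IH hy.
  case: (ltnP y m) => hym.
    case: y IH hy hym => [|y] _ hy hym; first by rewrite S0 dvdn0.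
    apply/esym; rewrite (_ : (m %| y.+1) = false); last first.
      by apply: negbTE; apply/negP => /dvdn_leq; lia.
    apply/esym; apply: negbTE; apply/negP => Sy.
    have : m <= y.+1 by apply: minm; rewrite /P Sy orbT andbT; lia.
    lia.
  have mlt : m < g by lia.
  have e : y = m + (y - m) by lia.
  rewrite [in m %| y]e dvdn_addr // -IH; try lia.
  apply/idP/idP => H.
    apply/negPn/negP => ny.
    have hz : y - m < g by lia.
    have := refl _ hz; rewrite (negbTE ny) /= => S2.
    have := refl _ hy; rewrite H => /= /negP; apply.
    have -> : y + g = m + (y - m + g) by lia.
    by rewrite eq_sym eqb_id; apply: Sadd (mS mlt) _; move: S2; case: (S _).
  rewrite e; exact: Sadd (mS mlt) H.
exists m.
  split; first by rewrite m0 mg.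
  move=> dg; case: (ltnP m g) => hmg; last by lia.
  have mult : forall k, S (k * m).
    by elim=> [|k IHk]; rewrite ?mul0n // mulSn; apply: Sadd (mS hmg) IHk.
  by move: Sg; rewrite -(divnK dg) mult.
move=> x; rewrite /Sm.
case: ifP => hx; first exact: low.
case: ifP => hx2; last by apply: big; lia.
have hz : x - g < g by lia.
have := refl _ hz; rewrite subnK; last by lia.
by rewrite low //; case: (m %| x - g); case: (S x).
Qed.


Definition Lg (g : nat) := [seq m <- iota 1 g | (m == g) || ~~ (m %| g)].

Lemma Lg_uniq g : uniq (Lg g).
Proof. by rewrite filter_uniq ?iota_uniq. Qed.

Lemma mem_Lg g m : (m \in Lg g) = (0 < m <= g) && ((m == g) || ~~ (m %| g)).
Proof. by rewrite mem_filter mem_iota andbC add1n ltnS. Qed.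

Lemma size_Lg g : 0 < g -> size (Lg g) = g + 1 - tau g.
Proof.
move=> g0.
have hdiv : count (fun d => d %| g) (iota 1 g) = tau g.
  rewrite -size_filter /tau; apply: perm_size; apply: uniq_perm.
  - by rewrite filter_uniq ?iota_uniq.
  - exact: divisors_uniq.
  move=> d; rewrite mem_filter mem_iota -dvdn_divisors //.
  case dg: (d %| g) => //=; rewrite add1n ltnS.
  have := dvdn_leq g0 dg; case: d dg => [|d] dg; last by move=> ->.
  by rewrite dvd0n in dg; move: g0; rewrite (eqP dg).
have h1 : count (pred1 g) (iota 1 g) = 1.
  by rewrite count_uniq_mem ?iota_uniq // mem_iota; apply/eqP; rewrite eqb1; lia.
have hI : count (predI (pred1 g) (predC (fun d => d %| g))) (iota 1 g) = 0.
  by apply/eqP; rewrite -leqn0 leqNgt -has_count; apply/hasP => [[x _ /= /andP[/eqP -> ]]]; rewrite dvdnn.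
have hC := count_predC (fun d => d %| g) (iota 1 g).
have hU := count_predUI (pred1 g) (predC (fun d => d %| g)) (iota 1 g).
rewrite size_filter size_iota in hC *.
rewrite (@eq_count _ _ (predU (pred1 g) (predC (fun d => d %| g)))) //.
rewrite hI addn0 h1 in hU; rewrite hU.
have hC2 := hC; rewrite hdiv in hC2.
have e1 : count (predC (fun d => d %| g)) (iota 1 g) = g - tau g by lia.
rewrite e1; lia.
Qed.


Lemma Sm_inj g a b : 0 < a <= g -> 0 < b <= g -> Sm g a =1 Sm g b -> a = b.
Proof.
have key : forall a b, 0 < a <= g -> Sm g a =1 Sm g b -> a < g -> b %| a.
  move=> x y _ e hx; have := e x; rewrite /Sm hx dvdnn.
  by move=> <-.
move=> ha hb e.
case: (ltnP a g) => hag; case: (ltnP b g) => hbg.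
- by apply/eqP; rewrite eqn_dvd (key _ _ hb (fun x => esym (e x)) hbg) (key _ _ ha e hag).
- have := key _ _ ha e hag => /dvdn_leq; lia.
- have := key _ _ hb (fun x => esym (e x)) hbg => /dvdn_leq; lia.
- lia.
Qed.

Theorem mainTheorem15 (g : nat) : 1 <= g ->
  exists f : 'I_(g + 1 - tau g) -> (nat -> bool),
    [/\ forall i, reflective_of_genus (f i) g,
        forall i j, f i =1 f j -> i = j &
        forall S, reflective_of_genus S g -> exists i, f i =1 S].
Proof.
move=> g0.
have sz := size_Lg _ g0.
have memi : forall i : 'I_(g + 1 - tau g), nth 0 (Lg g) i \in Lg g.
  by move=> i; rewrite mem_nth // sz.
exists (fun i => Sm g (nth 0 (Lg g) i)); split.
- move=> i; have := memi i; rewrite mem_Lg => /andP[hm hd].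
  apply: Sm_refl => //; move=> dg; move: hd; rewrite dg orbF; exact/eqP.
- move=> i j e.
  have := memi i; rewrite mem_Lg => /andP[hi _].
  have := memi j; rewrite mem_Lg => /andP[hj _].
  have := Sm_inj _ _ _ hi hj e => /eqP; rewrite nth_uniq ?sz // ?Lg_uniq // => /eqP hij.
  exact: val_inj.
- move=> S hS; have [m [hm hd] e] := complete _ _ hS.
  have mL : m \in Lg g.
    rewrite mem_Lg hm /=; case: (boolP (m %| g)) => [/hd -> |]; by rewrite ?eqxx ?orbT.
  have hi : index m (Lg g) < g + 1 - tau g by rewrite -sz index_mem.
  exists (Ordinal hi) => x /=; rewrite nth_index // e //.
Qed.
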